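(* Let $F$ be a field of characteristic zero and $n$ a natural number. There is no nonzero element $l\in W(n,0)$ such that every basis element $b\in\{e^{a_1x_1}\cdots e^{a_nx_n}x_1^{b_1}\cdots x_n^{b_n}\partial_i: a_j,b_j\in\mathbb Z,1\le i\le n\}$ is an eigenvector of $\mathrm{ad}\,l$ (i.e. $[b,l]\in Fb$ for all such $b$).
   Context: $W(n,0)$ is the Lie algebra with basis $e^{\alpha}x^{\beta}\partial_i$ ($\alpha,\beta\in\mathbb Z^n$, $1\le i\le n$), realized as vector fields $f\partial_i$ with $f$ in the commutative algebra with basis $e^{\alpha}x^{\beta}$ (multiplication adding exponents), $\partial_i(e^{\alpha}x^{\beta})=a_ie^{\alpha}x^{\beta}+b_ie^{\alpha}x^{\beta-\epsilon_i}$, and bracket $[f\partial_i,g\partial_j]=f\partial_i(g)\partial_j-g\partial_j(f)\partial_i$. *)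

(* Defs.v *)
From HB Require Import structures.
From mathcomp Require Import all_boot all_order all_algebra.
From mathcomp Require Import finmap.
Set Implicit Arguments. Unset Strict Implicit. Unset Printing Implicit Defensive.
Import Order.TTheory GRing.Theory Num.Theory.
Local Open Scope ring_scope.


Definition zvec (n : nat) := {ffun 'I_n -> int}.

(* Index of the basis element e^alpha x^beta d_i : (alpha, beta, i). *)
Definition Wbas (n : nat) := (zvec n * zvec n * 'I_n)%type.

Definition zadd n (a b : zvec n) : zvec n := [ffun k => a k + b k].
Definition zsub n (a b : zvec n) : zvec n := [ffun k => a k - b k].
Definition zeps n (i : 'I_n) : zvec n := [ffun k => ((k == i) : nat)%:Z].

Definition W (n : nat) (F : fieldType) := {fsfun Wbas n -> F with 0}.

Definition delta n (F : fieldType) (b d : Wbas n) : F := (d == b)%:R.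

(* With f = e^a x^b, g = e^c x^e:
   [f d_i, g d_j] = f d_i(g) d_j - g d_j(f) d_i, where
   d_i(e^c x^e) = c_i e^c x^e + e_i e^c x^(e - eps_i), and multiplication
   adds exponents. *)
Definition brk_basis n (F : fieldType) (b c : Wbas n) : Wbas n -> F :=
  let: (a, be, i) := b in
  let: (g, de, j) := c in
  fun d =>
    (g i)%:~R * delta F (zadd a g, zadd be de, j) d
  + (de i)%:~R * delta F (zadd a g, zsub (zadd be de) (zeps i), j) d
  - (a j)%:~R * delta F (zadd a g, zadd be de, i) d
  - (be j)%:~R * delta F (zadd a g, zsub (zadd be de) (zeps j), i) d.

Definition ad_basis n (F : fieldType) (b : Wbas n) (l : W n F) : Wbas n -> F :=
  fun d => \sum_(c <- (finsupp l : seq _)) l c * brk_basis F b c d.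

Definition eigen_basis n (F : fieldType) (l : W n F) (b : Wbas n) : Prop :=
  exists lam : F, forall d, ad_basis b l d = lam * delta F b d.

(* Main.v *)
Require Import Defs.
From HB Require Import structures.
From mathcomp Require Import all_boot all_order all_algebra.
From mathcomp Require Import finmap.
From mathcomp Require Import zify.
Set Implicit Arguments. Unset Strict Implicit. Unset Printing Implicit Defensive.
Import Order.TTheory GRing.Theory Num.Theory.
Local Open Scope ring_scope.

Section Aux.
Variable F : fieldType.
Variable n : nat.
Hypothesis chF : [pchar F] =i pred0.

Lemma intrF_eq0 (z : int) : (z%:~R == 0 :> F) = (z == 0).
Proof.
have H := (pcharf0P F).1 chF.
case: z => m.
  by rewrite -pmulrn H.
by rewrite NegzE mulrNz oppr_eq0 -pmulrn H.
Qed.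

Lemma sum_single (l : W n F) (G : Wbas n -> F) x :
  (forall c, c \in finsupp l -> c != x -> G c = 0) ->
  \sum_(c <- finsupp l) l c * G c = l x * G x.
Proof.
move=> H; case: (boolP (x \in finsupp l)) => xin.
  rewrite (bigD1_seq x) //= ?fset_uniq // big1_seq ?addr0 // => c /andP[cx cin].
  by rewrite H ?mulr0.
rewrite big1_seq; last by move=> c /andP[_ cin]; rewrite H ?mulr0 //; apply: contraNneq xin => <-.
by rewrite (fsfun_dflt xin) mul0r.
Qed.

Lemma sum_zero (l : W n F) (G : Wbas n -> F) :
  (forall c, c \in finsupp l -> G c = 0) ->
  \sum_(c <- finsupp l) l c * G c = 0.
Proof. by move=> H; rewrite big1_seq // => c /andP[_ cin]; rewrite H ?mulr0. Qed.

Definition z0 : zvec n := [ffun => 0].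

Lemma adE (a be : zvec n) (i : 'I_n) (l : W n F) d :
  ad_basis (a, be, i) l d =
    \sum_(c <- finsupp l) l c * ((c.1.1 i)%:~R * delta F (zadd a c.1.1, zadd be c.1.2, c.2) d)
  + \sum_(c <- finsupp l) l c * ((c.1.2 i)%:~R * delta F (zadd a c.1.1, zsub (zadd be c.1.2) (zeps i), c.2) d)
  - \sum_(c <- finsupp l) l c * ((a c.2)%:~R * delta F (zadd a c.1.1, zadd be c.1.2, i) d)
  - \sum_(c <- finsupp l) l c * ((be c.2)%:~R * delta F (zadd a c.1.1, zsub (zadd be c.1.2) (zeps c.2), i) d).
Proof.
rewrite /ad_basis -big_split -!sumrB /=; apply: eq_bigr => -[[g de] j] _ /=.
by rewrite !mulrDr !mulrN.
Qed.


Lemma zadd0 (v : zvec n) : zadd z0 v = v.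
Proof. by apply/ffunP => k; rewrite !ffunE add0r. Qed.

Lemma zaddsubK (v e : zvec n) : zsub (zadd v e) e = v.
Proof. by apply/ffunP => k; rewrite !ffunE addrK. Qed.

Lemma zsubaddK (v e : zvec n) : zadd (zsub v e) e = v.
Proof. by apply/ffunP => k; rewrite !ffunE subrK. Qed.

Lemma deltaxx (x : Wbas n) : delta F x x = 1.
Proof. by rewrite /delta eqxx. Qed.

Lemma delta_neq (x y : Wbas n) : x != y -> delta F x y = 0.
Proof. by rewrite /delta eq_sym => /negPf ->. Qed.

Lemma z0E k : z0 k = 0.
Proof. by rewrite ffunE. Qed.

Lemma zepsE (i k : 'I_n) : zeps i k = (k == i)%:R.
Proof. by rewrite ffunE; case: (k == i). Qed.

Variable l : W n F.
Hypothesis Heig : forall b d, d != b -> ad_basis b l d = 0.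

Lemma rel (i : 'I_n) (g D : zvec n) (k : 'I_n) : (g, D, k) != (z0, z0, i) ->
  (g i)%:~R * l (g,D,k) + ((D i) + 1)%:~R * l (g, zadd D (zeps i), k) = 0.
Proof.
move=> H; have := Heig H; rewrite adE.
rewrite [X in _ - X - _]sum_zero; last by move=> c _; rewrite z0E mul0r.
rewrite [X in _ - X]sum_zero; last by move=> c _; rewrite z0E mul0r.
rewrite (@sum_single _ _ (g, D, k)); last first.
  by move=> -[[g' de'] j] _ /= cx; rewrite !zadd0 delta_neq ?mulr0 // eq_sym.
rewrite (@sum_single _ _ (g, zadd D (zeps i), k)); last first.
  move=> -[[g' de'] j] _ /= cx; rewrite !zadd0 delta_neq ?mulr0 //.
  apply: contra cx => /eqP [<- <- <-]; by rewrite zsubaddK.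
rewrite /= !zadd0 zaddsubK !deltaxx !mulr1 !subr0 ffunE zepsE eqxx.
by rewrite [_ * l _]mulrC [X in _ + X]mulrC.
Qed.


Lemma chain (g D : zvec n) (k i : 'I_n) : g i != 0 -> l (g,D,k) != 0 -> forall m : nat,
  exists D', l (g,D',k) != 0 /\ D' i = D i + m%:Z.
Proof.
move=> gi lx; elim=> [|m [D' [lD' eD']]].
  by exists D; rewrite addr0.
exists (zadd D' (zeps i)); split; last first.
  rewrite ffunE zepsE eqxx eD'; lia.
have ne : (g, D', k) != (z0, z0, i).
  by apply: contra gi => /eqP [-> _ _]; rewrite z0E.
apply/eqP => ly0; move: (rel ne); rewrite ly0 mulr0 addr0 => /eqP.
by rewrite mulf_eq0 intrF_eq0 (negPf gi) (negPf lD').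
Qed.

Lemma suppg c : c \in finsupp l -> forall i, c.1.1 i = 0.
Proof.
case: c => [[g D] k] cin i /=; apply/eqP; apply: contraT => gi.
have lx : l (g, D, k) != 0 by rewrite -mem_finsupp.
pose B := (\max_(c <- finsupp l) `|c.1.2 i|)%N.
have [D' [lD' eD']] := chain gi lx (B + `|D i|).+1.
have : (`|D' i| <= B)%N.
  have := @leq_bigmax_seq _ (finsupp l : seq _) xpredT (fun c => `|c.1.2 i|%N) (g, D', k).
  rewrite mem_finsupp lD' => /(_ isT isT). exact.
move=> h; have h2 : (`|D' i|%N%:Z <= B%:Z) by rewrite lez_nat.
have h3 := lez_abs (D' i); have h4 := lez_abs (- D i); rewrite abszN in h4.
clearbody B; move: h2 h3 h4 eD'; move: (D' i) (D i) => x y; clear; lia.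
Qed.


Lemma suppg' c : c \in finsupp l -> c.1.1 = z0.
Proof. by move=> cin; apply/ffunP => i; rewrite z0E (suppg cin). Qed.

Lemma zepsii (k : 'I_n) : zeps k k = 1.
Proof. by rewrite ffunE eqxx. Qed.

Lemma zaddr0 (v : zvec n) : zadd v z0 = v.
Proof. by apply/ffunP => k; rewrite !ffunE addr0. Qed.

Lemma zaddKl (v e : zvec n) : zsub (zadd e v) e = v.
Proof. by apply/ffunP => k; rewrite !ffunE addrAC subrr add0r. Qed.

Lemma suppD c : c \in finsupp l -> c.1.2 = z0 \/ c.1.2 = zeps c.2.
Proof.
move=> cin; have g0 := suppg' cin; move: cin g0.
case: c => [[g D] k] cin /= g0; subst g.
have lx : l (z0,D,k) != 0 by rewrite -mem_finsupp.
have Hi : forall i, D i = 0 \/ D = zeps k.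
  move=> i; case: (eqVneq (z0, zsub D (zeps i), k) (z0, z0, i)) => [[eD ek]| ne].
    by right; rewrite -(zsubaddK D (zeps i)) eD zadd0 ek.
  left; move: (rel ne); rewrite z0E mul0r add0r zsubaddK => /eqP.
  rewrite mulf_eq0 (negPf lx) orbF intrF_eq0 ffunE zepsii subrK.
  by move/eqP.
case: (eqVneq D (zeps k)) => [->|ne]; [by right | left].
apply/ffunP => i; rewrite z0E; case: (Hi i) => // e.
by rewrite e eqxx in ne.
Qed.

Lemma zeps_neq0 (k : 'I_n) : zeps k != z0.
Proof. apply/eqP => e; have := congr1 (fun v : zvec n => v k) e; by rewrite /= zepsii z0E. Qed.

Lemma nu0 k : l (z0, zeps k, k) = 0.
Proof.
have ne : (zeps k, zeps k, k) != (zeps k, z0, k).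
  by apply/eqP => -[] /eqP; rewrite (negPf (zeps_neq0 k)).
have := Heig ne; rewrite adE.
rewrite [X in X + _ - _ - _]sum_zero; last first.
  by move=> c cin /=; rewrite (suppg cin) mul0r.
rewrite [X in _ + X - _ - _]sum_zero; last first.
  move=> c cin /=; rewrite delta_neq ?mulr0 //; apply/eqP => e; have := congr1 (fun p : Wbas n => p.1.2 k) e => /=.
  rewrite !ffunE /= eqxx add0r.
  by case: (suppD cin) => ->; rewrite !ffunE; try case: (_ == _); move/eqP.
rewrite [X in _ - X]sum_zero; last by move=> c _ /=; rewrite z0E mul0r.
rewrite (@sum_single _ _ (z0, zeps k, k)); last first.
  move=> -[[g de] j] cin /= cx; have /= g0 := suppg' cin; subst g.
  case: (eqVneq j k) => [ejk|njk]; last by rewrite zepsE (negPf njk) mul0r.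
  subst j; rewrite delta_neq ?mulr0 //; apply: contra cx => /eqP [_ e].
  by rewrite zadd0 in e; rewrite e.
rewrite /= zepsii zaddr0 zadd0 deltaxx !mulr1 addr0 subr0 sub0r => /eqP.
by rewrite oppr_eq0 => /eqP.
Qed.

Lemma mu0 k : l (z0, z0, k) = 0.
Proof.
have ne : (z0, z0, k) != (z0, zeps k, k).
  by apply/eqP => -[] /esym /eqP; rewrite (negPf (zeps_neq0 k)).
have := Heig ne; rewrite adE.
rewrite [X in X + _ - _ - _]sum_zero; last first.
  by move=> c cin /=; rewrite (suppg cin) mul0r.
rewrite [X in _ + X - _ - _]sum_zero; last first.
  move=> -[[g de] j] cin /=; rewrite zaddKl.
  case: (eqVneq de z0) => [->|nde]; first by rewrite z0E mul0r.
  rewrite delta_neq ?mulr0 //; apply: contra nde => /eqP [_ ->] //.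
rewrite [X in _ - X - _]sum_zero; last by move=> c _ /=; rewrite z0E mul0r.
rewrite (@sum_single _ _ (z0, z0, k)); last first.
  move=> -[[g de] j] cin /= cx.
  case: (eqVneq j k) => [ejk|njk]; last by rewrite zepsE (negPf njk) mul0r.
  subst j; rewrite zaddKl.
rewrite (zadd0 g) delta_neq ?mulr0 //.
rewrite /= zepsii zaddKl zadd0 deltaxx !mulr1 !(add0r, subr0, sub0r) => /eqP.
by rewrite oppr_eq0 => /eqP.
Qed.

End Aux.

Theorem corollary1 (F : fieldType) (n : nat) :
  [pchar F] =i pred0 ->
  ~ (exists l : W n F, (exists d : Wbas n, l d != 0) /\ forall b : Wbas n, eigen_basis l b).
Proof.
move=> chF [l [[d ld] Heig']].
have Heig : forall b d, d != b -> ad_basis b l d = 0.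
  by move=> b d' nd; have [lam ->] := Heig' b; rewrite delta_neq ?mulr0 // eq_sym.
have din : d \in finsupp l by rewrite mem_finsupp.
have g0 := suppg' chF Heig din.
move: ld din g0; case: d => [[g D] k] ld din /= g0; subst g.
case: (suppD chF Heig din) => e; simpl in e; rewrite e in ld.
  by rewrite (mu0 chF Heig) eqxx in ld.
by rewrite (nu0 chF Heig) eqxx in ld.
Qed.
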